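(* Let $\varepsilon>0$, $\Omega\subset\mathbb{R}^2$ bounded open, $u\in\mathcal{SF}_\varepsilon(\Omega)$ and $R\in\mathcal{R}_\varepsilon(u)$. Then $u(\mathcal{L}_\varepsilon(R))$ contains at most four points.
   Context: $\mathcal{L}=\{ae_1+b\hat e_2:a,b\in\mathbb{Z}\}$ with $e_1=(1,0)$, $\hat e_2=\frac12(1,\sqrt3)$, $\mathcal{L}_\varepsilon=\varepsilon\mathcal{L}$, $\mathcal{L}_\varepsilon(R)=\mathcal{L}_\varepsilon\cap R$; $\mathcal{T}_\varepsilon$ is the set of closed triangles with vertices in $\mathcal{L}_\varepsilon$ pairwise at distance $\varepsilon$; $\mathcal{E}_\varepsilon$ the set of segments $[i,j]$, $i,j\in\mathcal{L}_\varepsilon$, $|i-j|=\varepsilon$. $n=(0,0,1)$; $\mathcal{SF}_\varepsilon(\Omega)$ is the set of $u:\mathcal{L}_\varepsilon\to\mathbb{S}^2$ with $u=n$ on $\mathcal{L}_\varepsilon\setminus\Omega$. $\mathcal{N}_\varepsilon(u)=\{[i,j]\in\mathcal{E}_\varepsilon:u(i)=-u(j)\}$. Two triangles of $\mathcal{T}_\varepsilon$ are neighbours if their intersection is an edge in $\mathcal{N}_\varepsilon(u)$, and connected if joined by a finite chain of consecutive neighbours. $\mathcal{R}_\varepsilon(u)$ is the set of admissible interpolation regions: unions of pairwise connected triangles of $\mathcal{T}_\varepsilon$ that are maximal with respect to inclusion. *)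

(* Defs.v *)
From Stdlib Require Import Reals Relations.
Open Scope R_scope.

Definition pt2 := (R * R)%type.
Definition pt3 := (R * R * R)%type.

Definition dist2 (p q : pt2) : R :=
  sqrt ((fst p - fst q)^2 + (snd p - snd q)^2).

(* L_eps = eps * { a e1 + b e2hat : a b in Z }, e1=(1,0), e2hat=(1/2, sqrt3/2) *)
Definition in_lattice (eps : R) (p : pt2) : Prop :=
  exists a b : Z,
    p = (eps * (IZR a + IZR b / 2), eps * (IZR b * sqrt 3 / 2)).

Definition on_sphere (v : pt3) : Prop :=
  let '(x, y, z) := v in x^2 + y^2 + z^2 = 1.

Definition north : pt3 := (0, 0, 1).
Definition opp3 (v : pt3) : pt3 := let '(x, y, z) := v in (-x, -y, -z).

Definition open2 (O : pt2 -> Prop) : Prop :=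
  forall x, O x -> exists r, 0 < r /\ forall y, dist2 x y < r -> O y.
Definition bounded2 (O : pt2 -> Prop) : Prop :=
  exists M, forall x, O x -> dist2 (0,0) x <= M.

(* u in SF_eps(Omega): u : L_eps -> S^2, u = n on L_eps \ Omega.
   u is given as a function on R^2; only its values on L_eps matter. *)
Definition SF (eps : R) (Omega : pt2 -> Prop) (u : pt2 -> pt3) : Prop :=
  (forall p, in_lattice eps p -> on_sphere (u p)) /\
  (forall p, in_lattice eps p -> ~ Omega p -> u p = north).

Definition seg (i j : pt2) (x : pt2) : Prop :=
  exists t, 0 <= t <= 1 /\
    x = ((1 - t) * fst i + t * fst j, (1 - t) * snd i + t * snd j).

Definition tri (i j k : pt2) (x : pt2) : Prop :=
  exists a b c, 0 <= a /\ 0 <= b /\ 0 <= c /\ a + b + c = 1 /\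
    x = (a * fst i + b * fst j + c * fst k, a * snd i + b * snd j + c * snd k).

Definition seteq (A B : pt2 -> Prop) : Prop := forall x, A x <-> B x.

Definition is_triangle (eps : R) (T : pt2 -> Prop) : Prop :=
  exists i j k, in_lattice eps i /\ in_lattice eps j /\ in_lattice eps k /\
    dist2 i j = eps /\ dist2 j k = eps /\ dist2 i k = eps /\
    seteq T (tri i j k).

Definition antipodal_edge (eps : R) (u : pt2 -> pt3) (i j : pt2) : Prop :=
  in_lattice eps i /\ in_lattice eps j /\ dist2 i j = eps /\ u i = opp3 (u j).

Definition neighbours (eps : R) (u : pt2 -> pt3) (T1 T2 : pt2 -> Prop) : Prop :=
  is_triangle eps T1 /\ is_triangle eps T2 /\
  exists i j, antipodal_edge eps u i j /\
    seteq (fun x => T1 x /\ T2 x) (seg i j).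

Definition tri_connected (eps : R) (u : pt2 -> pt3) : relation (pt2 -> Prop) :=
  clos_refl_trans _ (neighbours eps u).

Definition conn_union (eps : R) (u : pt2 -> pt3) (S : pt2 -> Prop) : Prop :=
  exists F : (pt2 -> Prop) -> Prop,
    (forall T, F T -> is_triangle eps T) /\
    (forall T1 T2, F T1 -> F T2 -> tri_connected eps u T1 T2) /\
    seteq S (fun x => exists T, F T /\ T x).

Definition admissible_region (eps : R) (u : pt2 -> pt3) (Rg : pt2 -> Prop) : Prop :=
  conn_union eps u Rg /\
  forall S, conn_union eps u S -> (forall x, Rg x -> S x) -> forall x, S x -> Rg x.

(* Main.v *)
Require Import Defs.
From Stdlib Require Import Reals.
From Stdlib Require Import Relations Lia Arith Lra Psatz Classical FunctionalExtensionality PropExtensionality.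
Open Scope nat_scope.

Definition walk {V} (N : V -> V -> Prop) (f : nat -> V) n :=
  forall k, k < n -> N (f k) (f (S k)).
Definition nbt {V} (f : nat -> V) n := forall k, k + 2 <= n -> f (k+2) <> f k.

Lemma crt_walk {V} (N : V -> V -> Prop) x y :
  clos_refl_trans V N x y -> exists f n, f 0 = x /\ f n = y /\ walk N f n.
Proof.
  induction 1 as [x y H| x | x y z _ [f [n [f0 [fn fw]]]] _ [g [m [g0 [gm gw]]]]].
  - exists (fun k => match k with 0 => x | _ => y end), 1. repeat split; auto.
    intros k Hk. assert (k = 0) by lia. subst. exact H.
  - exists (fun _ => x), 0. repeat split. intros k Hk; lia.
  - exists (fun k => if k <=? n then f k else g (k - n)), (n + m).
    repeat split.
    + simpl. exact f0.
    + destruct (n + m <=? n) eqn:E.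
      * apply Nat.leb_le in E. assert (m = 0) by lia. subst m.
        rewrite Nat.add_0_r. rewrite fn, <- gm. auto.
      * replace (n + m - n) with m by lia. exact gm.
    + intros k Hk. destruct (k <=? n) eqn:E1; destruct (S k <=? n) eqn:E2.
      * apply fw. apply Nat.leb_le in E2; lia.
      * apply Nat.leb_le in E1. apply Nat.leb_gt in E2. assert (k = n) by lia. subst k.
        rewrite fn, <- g0. replace (S n - n) with 1 by lia. apply gw. lia.
      * apply Nat.leb_gt in E1. apply Nat.leb_le in E2. lia.
      * apply Nat.leb_gt in E1. replace (S k - n) with (S (k - n)) by lia. apply gw. lia.
Qed.

Lemma walk_nbt {V} (N : V -> V -> Prop) x y :
  forall n f, f 0 = x -> f n = y -> walk N f n ->
  exists g m, g 0 = x /\ g m = y /\ walk N g m /\ nbt g m.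
Proof.
  intro n. induction n as [n IH] using (well_founded_induction lt_wf).
  intros f f0 fn fw.
  destruct (classic (nbt f n)) as [Hn|Hn].
  - exists f, n; auto.
  - unfold nbt in Hn. apply not_all_ex_not in Hn. destruct Hn as [k Hk].
    apply imply_to_and in Hk. destruct Hk as [Hk Heq]. apply NNPP in Heq.
    set (g := fun j => if j <? k then f j else f (j + 2)).
    apply (IH (n - 2)) with g; [lia| | |].
    + unfold g. destruct (0 <? k) eqn:E; auto. apply Nat.ltb_ge in E.
      assert (k = 0) by lia. subst k. simpl in Heq. simpl. rewrite Heq. auto.
    + unfold g. destruct (n - 2 <? k) eqn:E. apply Nat.ltb_lt in E. lia.
      replace (n - 2 + 2) with n by lia. auto.
    + intros j Hj. unfold g. destruct (j <? k) eqn:E1; destruct (S j <? k) eqn:E2.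
      * apply fw. apply Nat.ltb_lt in E1; lia.
      * apply Nat.ltb_lt in E1. apply Nat.ltb_ge in E2. assert (j + 1 = k) by lia.
        replace (S j + 2) with (k + 2) by lia. rewrite Heq. replace k with (S j) by lia.
        apply fw. lia.
      * apply Nat.ltb_ge in E1. apply Nat.ltb_lt in E2. lia.
      * replace (S j + 2) with (S (j + 2)) by lia. apply fw. lia.
Qed.

Lemma nbt_unique {V} (N : V -> V -> Prop) l
  (Nsym : forall x y, N x y -> N y x)
  (deg2 : forall x y z w, N x y -> N x z -> N x w -> y = z \/ y = w \/ z = w)
  (leaf : forall y z, N l y -> N l z -> y = z)
  f n g m : f 0 = l -> g 0 = l -> walk N f n -> walk N g m -> nbt f n -> nbt g m ->
  forall k, S k <= n -> S k <= m -> f k = g k /\ f (S k) = g (S k).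
Proof.
  intros f0 g0 fw gw fn gn k. induction k as [|k IH]; intros H1 H2.
  - split. congruence. apply leaf. rewrite <- f0. apply fw; lia. rewrite <- g0; apply gw; lia.
  - destruct IH as [E1 E2]; try lia. split; auto.
    assert (A1 : N (f (S k)) (f k)) by (apply Nsym, fw; lia).
    assert (A2 : N (f (S k)) (f (S (S k)))) by (apply fw; lia).
    assert (A3 : N (f (S k)) (g (S (S k)))) by (rewrite E2; apply gw; lia).
    destruct (deg2 _ _ _ _ A1 A2 A3) as [C|[C|C]]; auto.
    + exfalso. apply (fn k). lia. replace (k+2) with (S (S k)) by lia. auto.
    + exfalso. apply (gn k). lia. replace (k+2) with (S (S k)) by lia. congruence.
Qed.

Lemma three_leaves {V} (N : V -> V -> Prop)
  (Nsym : forall x y, N x y -> N y x)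
  (deg2 : forall x y z w, N x y -> N x z -> N x w -> y = z \/ y = w \/ z = w)
  l1 l2 l3
  (leaf1 : forall y z, N l1 y -> N l1 z -> y = z)
  (leaf2 : forall y z, N l2 y -> N l2 z -> y = z)
  (leaf3 : forall y z, N l3 y -> N l3 z -> y = z)
  (d12 : l1 <> l2) (d13 : l1 <> l3) (d23 : l2 <> l3)
  (c12 : clos_refl_trans V N l1 l2) (c13 : clos_refl_trans V N l1 l3) : False.
Proof.
  destruct (crt_walk _ _ _ c12) as [f0 [n0 [A1 [A2 A3]]]].
  destruct (walk_nbt _ _ _ _ _ A1 A2 A3) as [f [n [f0e [fne [fw fn]]]]].
  destruct (crt_walk _ _ _ c13) as [g0 [m0 [B1 [B2 B3]]]].
  destruct (walk_nbt _ _ _ _ _ B1 B2 B3) as [g [m [g0e [gme [gw gn]]]]].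
  assert (U := nbt_unique N l1 Nsym deg2 leaf1 f n g m f0e g0e fw gw fn gn).
  assert (U2 := nbt_unique N l1 Nsym deg2 leaf1 g m f n g0e f0e gw fw gn fn).
  assert (n <> 0) by (intro; subst; congruence).
  assert (m <> 0) by (intro; subst; congruence).
  destruct (lt_eq_lt_dec n m) as [[Hlt|Heq]|Hgt].
  - (* g n = l2, inner vertex of g *)
    assert (E : g n = l2). { destruct n; [lia|]. destruct (U n); try lia. congruence. }
    assert (X1 : N l2 (g (n - 1))). { apply Nsym. rewrite <- E. replace n with (S (n-1)) at 2 by lia. apply gw; lia. }
    assert (X2 : N l2 (g (S n))). { rewrite <- E. apply gw; lia. }
    apply (gn (n-1)). lia. replace (n - 1 + 2) with (S n) by lia. apply leaf2; auto.
  - subst m. destruct n; [lia|]. destruct (U n); try lia. congruence.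
  - assert (E : f m = l3). { destruct m; [lia|]. destruct (U2 m); try lia. congruence. }
    assert (X1 : N l3 (f (m - 1))). { apply Nsym. rewrite <- E. replace m with (S (m-1)) at 2 by lia. apply fw; lia. }
    assert (X2 : N l3 (f (S m))). { rewrite <- E. apply fw; lia. }
    apply (fn (m-1)). lia. replace (m - 1 + 2) with (S m) by lia. apply leaf3; auto.
Qed.
Open Scope R_scope.

Definition sqd (p q : pt2) := (fst p - fst q)^2 + (snd p - snd q)^2.

Lemma sqd_ge0 p q : 0 <= sqd p q.
Proof. unfold sqd. assert (H1 := pow2_ge_0 (fst p - fst q)); assert (H2 := pow2_ge_0 (snd p - snd q)); lra. Qed.

Lemma sqd_sym p q : sqd p q = sqd q p.
Proof. unfold sqd. ring. Qed.

Lemma dist_sqd eps p q : 0 < eps -> dist2 p q = eps -> sqd p q = eps^2.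
Proof.
  intros He H. unfold dist2 in H. fold (sqd p q) in H.
  rewrite <- H. simpl. rewrite Rmult_1_r. rewrite sqrt_sqrt; auto. apply sqd_ge0.
Qed.

Lemma Zquad (x y : Z) : (x <> 0 \/ y <> 0)%Z -> (x*x + x*y + y*y >= 1)%Z.
Proof. intros [H|H]; nia. Qed.

Lemma lat_sep eps p q : in_lattice eps p -> in_lattice eps q -> p <> q -> eps^2 <= sqd p q.
Proof.
  intros [a [b Hp]] [c [d Hq]] Hne. subst.
  assert (Hz : (a - c <> 0 \/ b - d <> 0)%Z).
  { destruct (Z.eq_dec a c); destruct (Z.eq_dec b d); try lia. subst. tauto. }
  apply Zquad in Hz. apply Z.ge_le in Hz. apply IZR_le in Hz.
  rewrite !plus_IZR, !mult_IZR, !minus_IZR in Hz.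
  assert (H3 : sqrt 3 * sqrt 3 = 3) by (apply sqrt_sqrt; lra).
  unfold sqd; simpl.
  set (s := sqrt 3) in *.
  set (A := IZR a) in *. set (B := IZR b) in *. set (C := IZR c) in *. set (D := IZR d) in *.
  replace ((eps * (A + B / 2) - eps * (C + D / 2)) * ((eps * (A + B / 2) - eps * (C + D / 2)) * 1) +
     (eps * (B * s / 2) - eps * (D * s / 2)) * ((eps * (B * s / 2) - eps * (D * s / 2)) * 1))
    with (eps^2 * ((A - C) * (A - C) + (A - C) * (B - D) + (B - D) * (B - D))
          + eps^2 * (B - D)^2 / 4 * (s * s - 3)) by (field).
  rewrite H3. replace (s*s - 3) with 0 by lra. 
  assert (0 <= eps^2) by nra. nra.
Qed.

Lemma tri_v1 i j k : tri i j k i.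
Proof. exists 1, 0, 0. repeat split; try lra. destruct i; simpl; f_equal; ring. Qed.
Lemma tri_v2 i j k : tri i j k j.
Proof. exists 0, 1, 0. repeat split; try lra. destruct j; simpl; f_equal; ring. Qed.
Lemma tri_v3 i j k : tri i j k k.
Proof. exists 0, 0, 1. repeat split; try lra. destruct k; simpl; f_equal; ring. Qed.

Lemma seg_l i j : seg i j i.
Proof. exists 0. split; [lra|]. destruct i; simpl; f_equal; ring. Qed.
Lemma seg_r i j : seg i j j.
Proof. exists 1. split; [lra|]. destruct j; simpl; f_equal; ring. Qed.
Lemma seg_sym i j x : seg i j x -> seg j i x.
Proof. intros [t [Ht ->]]. exists (1 - t). split; [lra|]. f_equal; ring. Qed.

Lemma tri_convex p q r x1 x2 x3 x :
  tri p q r x1 -> tri p q r x2 -> tri p q r x3 -> tri x1 x2 x3 x -> tri p q r x.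
Proof.
  intros [a1 [b1 [c1 [? [? [? [? E1]]]]]]] [a2 [b2 [c2 [? [? [? [? E2]]]]]]]
         [a3 [b3 [c3 [? [? [? [? E3]]]]]]] [a [b [c [? [? [? [? E]]]]]]].
  subst x1 x2 x3 x. simpl.
  exists (a*a1+b*a2+c*a3), (a*b1+b*b2+c*b3), (a*c1+b*c2+c*c3).
  repeat split.
  - assert (0 <= a*a1) by (apply Rmult_le_pos; auto).
    assert (0 <= b*a2) by (apply Rmult_le_pos; auto).
    assert (0 <= c*a3) by (apply Rmult_le_pos; auto). lra.
  - assert (0 <= a*b1) by (apply Rmult_le_pos; auto).
    assert (0 <= b*b2) by (apply Rmult_le_pos; auto).
    assert (0 <= c*b3) by (apply Rmult_le_pos; auto). lra.
  - assert (0 <= a*c1) by (apply Rmult_le_pos; auto).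
    assert (0 <= b*c2) by (apply Rmult_le_pos; auto).
    assert (0 <= c*c3) by (apply Rmult_le_pos; auto). lra.
  - transitivity (a*(a1+b1+c1) + b*(a2+b2+c2) + c*(a3+b3+c3)). ring.
    rewrite H2, H6, H10. lra.
  - f_equal; ring.
Qed.

Lemma tri_lat eps i j k p : 0 < eps ->
  in_lattice eps i -> in_lattice eps j -> in_lattice eps k -> in_lattice eps p ->
  sqd i j = eps^2 -> sqd j k = eps^2 -> sqd i k = eps^2 ->
  tri i j k p -> p = i \/ p = j \/ p = k.
Proof.
  intros He Li Lj Lk Lp Hij Hjk Hik Ht.
  destruct (classic (p = i)); auto. destruct (classic (p = j)); auto.
  destruct (classic (p = k)); auto. exfalso.
  assert (Di := lat_sep _ _ _ Lp Li H).
  assert (Dj := lat_sep _ _ _ Lp Lj H0).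
  assert (Dk := lat_sep _ _ _ Lp Lk H1).
  destruct Ht as [a [b [c [Ha [Hb [Hc [Hs Ep]]]]]]].
  assert (Id : a * sqd p i + b * sqd p j + c * sqd p k
               = a*b*sqd i j + b*c*sqd j k + a*c*sqd i k).
  { subst p. unfold sqd. simpl. replace c with (1 - a - b) by lra. ring. }
  rewrite Hij, Hjk, Hik in Id.
  assert (E2 : 0 < eps^2) by nra.
  assert (a * eps^2 <= a * sqd p i) by (apply Rmult_le_compat_l; auto).
  assert (b * eps^2 <= b * sqd p j) by (apply Rmult_le_compat_l; auto).
  assert (c * eps^2 <= c * sqd p k) by (apply Rmult_le_compat_l; auto).
  assert (Q : a*b + b*c + a*c <= 1/2) by nra.
  assert (eps^2 <= (a*b + b*c + a*c) * eps^2) by nra.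
  nra.
Qed.

Lemma seg_lat eps i j p : 0 < eps ->
  in_lattice eps i -> in_lattice eps j -> in_lattice eps p ->
  sqd i j = eps^2 -> seg i j p -> p = i \/ p = j.
Proof.
  intros He Li Lj Lp Hij Hs.
  destruct (classic (p = i)); auto. destruct (classic (p = j)); auto. exfalso.
  assert (Di := lat_sep _ _ _ Lp Li H).
  assert (Dj := lat_sep _ _ _ Lp Lj H0).
  destruct Hs as [t [Ht Ep]].
  assert (E1 : sqd p i = t^2 * sqd i j) by (subst p; unfold sqd; simpl; ring).
  assert (E2 : sqd p j = (1-t)^2 * sqd i j) by (subst p; unfold sqd; simpl; ring).
  rewrite Hij in E1, E2.
  assert (P : 0 < eps^2) by nra.
  assert (1 <= t^2) by nra. assert (1 <= (1-t)^2) by nra. nra.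
Qed.

Lemma two_point (p q r1 r2 r3 : pt2) e2 : 0 < e2 -> sqd p q = e2 ->
  sqd r1 p = e2 -> sqd r1 q = e2 -> sqd r2 p = e2 -> sqd r2 q = e2 ->
  sqd r3 p = e2 -> sqd r3 q = e2 -> r1 = r2 \/ r1 = r3 \/ r2 = r3.
Proof.
  destruct p as [p1 p2], q as [q1 q2], r1 as [x1 y1], r2 as [x2 y2], r3 as [x3 y3].
  unfold sqd; simpl. intros He Hpq H1p H1q H2p H2q H3p H3q.
  set (d1 := q1 - p1) in *. set (d2 := q2 - p2) in *.
  assert (Dot : forall x y, (x - p1)^2 + (y - p2)^2 = e2 -> (x - q1)^2 + (y - q2)^2 = e2 ->
     (x - p1) * d1 + (y - p2) * d2 = e2 / 2).
  { intros x y A B. unfold d1, d2. nra. }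
  assert (Cr : forall x y, (x - p1)^2 + (y - p2)^2 = e2 -> (x - q1)^2 + (y - q2)^2 = e2 ->
     ((x - p1) * d2 - (y - p2) * d1)^2 = e2 * e2 - e2 * e2 / 4).
  { intros x y A B. assert (D := Dot x y A B).
    replace (((x - p1) * d2 - (y - p2) * d1)^2) with
      (((x-p1)^2 + (y-p2)^2) * (d1^2 + d2^2) - ((x - p1) * d1 + (y - p2) * d2)^2) by ring.
    assert (Hd : d1^2 + d2^2 = e2) by (unfold d1, d2; nra).
    rewrite A, D, Hd. field. }
  assert (Det : forall x y x' y', (x - p1)^2 + (y - p2)^2 = e2 -> (x - q1)^2 + (y - q2)^2 = e2 ->
     (x' - p1)^2 + (y' - p2)^2 = e2 -> (x' - q1)^2 + (y' - q2)^2 = e2 ->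
     (x - p1) * d2 - (y - p2) * d1 = (x' - p1) * d2 - (y' - p2) * d1 -> (x, y) = (x', y')).
  { intros x y x' y' A B A' B' C.
    assert (D := Dot x y A B). assert (D' := Dot x' y' A' B').
    assert (Z : ((x - x')^2 + (y - y')^2) * (d1^2 + d2^2) = 0).
    { replace (((x - x')^2 + (y - y')^2) * (d1^2 + d2^2)) with
       (((x-p1)*d1 + (y-p2)*d2 - ((x'-p1)*d1 + (y'-p2)*d2))^2 +
        ((x - p1) * d2 - (y - p2) * d1 - ((x' - p1) * d2 - (y' - p2) * d1))^2) by ring.
      rewrite D, D', C. ring. }
    assert (Hd : d1^2 + d2^2 = e2) by (unfold d1, d2; nra).
    rewrite Hd in Z.
    assert (Z2 : (x - x')^2 + (y - y')^2 = 0) by (apply (Rmult_eq_reg_r e2); lra).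
    assert (P1 := pow2_ge_0 (x - x')). assert (P2 := pow2_ge_0 (y - y')).
    assert (Q1 : (x - x')^2 = 0) by lra. assert (Q2 : (y - y')^2 = 0) by lra.
    assert (R1 : x - x' = 0) by (apply Rsqr_0_uniq; unfold Rsqr; lra).
    assert (R2 : y - y' = 0) by (apply Rsqr_0_uniq; unfold Rsqr; lra).
    f_equal; lra. }
  set (c1 := (x1 - p1) * d2 - (y1 - p2) * d1).
  set (c2 := (x2 - p1) * d2 - (y2 - p2) * d1).
  set (c3 := (x3 - p1) * d2 - (y3 - p2) * d1).
  assert (K1 := Cr _ _ H1p H1q). assert (K2 := Cr _ _ H2p H2q). assert (K3 := Cr _ _ H3p H3q).
  fold c1 in K1. fold c2 in K2. fold c3 in K3.
  assert (S12 : c1 = c2 \/ c1 = - c2) by (apply Rsqr_eq; unfold Rsqr; nra).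
  assert (S13 : c1 = c3 \/ c1 = - c3) by (apply Rsqr_eq; unfold Rsqr; nra).
  destruct S12 as [S12|S12].
  - left. apply Det; auto.
  - destruct S13 as [S13|S13].
    + right; left. apply Det; auto.
    + right; right. apply Det; auto. fold c2 c3. lra.
Qed.

Lemma opp3_inv v : opp3 (opp3 v) = v.
Proof. destruct v as [[x y] z]. simpl. f_equal; [f_equal|]; ring. Qed.

Lemma sphere_nofix v : on_sphere v -> v <> opp3 v.
Proof.
  destruct v as [[x y] z]. simpl. intros H E. injection E; intros. nra.
Qed.

Lemma seteq_eq (A B : pt2 -> Prop) : seteq A B -> A = B.
Proof.
  intro H. extensionality x. apply propositional_extensionality. apply H.
Qed.

Definition TRI eps (T : pt2 -> Prop) i j k :=
  in_lattice eps i /\ in_lattice eps j /\ in_lattice eps k /\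
  sqd i j = eps^2 /\ sqd j k = eps^2 /\ sqd i k = eps^2 /\ seteq T (tri i j k).

Lemma is_tri_TRI eps T : 0 < eps -> is_triangle eps T -> exists i j k, TRI eps T i j k.
Proof.
  intros He [i [j [k [Li [Lj [Lk [D1 [D2 [D3 S]]]]]]]]].
  exists i, j, k. refine (conj Li (conj Lj (conj Lk (conj _ (conj _ (conj _ S)))))); apply dist_sqd; auto.
Qed.

Lemma sqd_refl p : sqd p p = 0.
Proof. unfold sqd. ring. Qed.

Lemma TRI_dist eps T i j k : 0 < eps -> TRI eps T i j k -> i <> j /\ j <> k /\ i <> k.
Proof.
  intros He (_&_&_&D1&D2&D3&_).
  assert (0 < eps^2) by nra.
  repeat split; intro E; subst; rewrite sqd_refl in *; lra.
Qed.

Lemma TRI_vert eps T i j k p : 0 < eps -> TRI eps T i j k -> in_lattice eps p -> T p ->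
  p = i \/ p = j \/ p = k.
Proof.
  intros He (Li&Lj&Lk&D1&D2&D3&S) Lp Tp. apply S in Tp.
  eapply tri_lat; eauto.
Qed.

Lemma TRI_in eps T i j k z : TRI eps T i j k -> z = i \/ z = j \/ z = k -> T z.
Proof.
  intros (_&_&_&_&_&_&S) H. apply S. destruct H as [->|[->| ->]].
  apply tri_v1. apply tri_v2. apply tri_v3.
Qed.

Lemma TRI_lat eps T i j k z : TRI eps T i j k -> z = i \/ z = j \/ z = k -> in_lattice eps z.
Proof. intros (Li&Lj&Lk&_) H. destruct H as [->|[->| ->]]; auto. Qed.

Lemma TRI_pair eps T i j k z w : TRI eps T i j k -> z = i \/ z = j \/ z = k ->
  w = i \/ w = j \/ w = k -> z <> w -> sqd z w = eps^2.
Proof.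
  intros (_&_&_&D1&D2&D3&_) Hz Hw Hne.
  destruct Hz as [->|[->| ->]]; destruct Hw as [->|[->| ->]];
  try (exfalso; apply Hne; reflexivity); rewrite ?D1, ?D2, ?D3; auto;
  rewrite sqd_sym; auto.
Qed.

Lemma third_vertex {A} (t1 t2 t3 p q : A) :
  t1 <> t2 -> t2 <> t3 -> t1 <> t3 ->
  (p = t1 \/ p = t2 \/ p = t3) -> (q = t1 \/ q = t2 \/ q = t3) -> p <> q ->
  exists k, (k = t1 \/ k = t2 \/ k = t3) /\ k <> p /\ k <> q /\
    forall z, (z = t1 \/ z = t2 \/ z = t3) -> z = p \/ z = q \/ z = k.
Proof.
  intros D1 D2 D3 Hp Hq Hpq.
  destruct Hp as [->|[->| ->]]; destruct Hq as [->|[->| ->]];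
  try (exfalso; apply Hpq; reflexivity);
  [exists t3|exists t2|exists t3|exists t1|exists t2|exists t1];
  (split; [tauto|]); (split; [congruence|]); (split; [congruence|]);
  intros z [->|[->| ->]]; tauto.
Qed.

Lemma in_tri_of_mem a b c z : z = a \/ z = b \/ z = c -> tri a b c z.
Proof. intros [->|[->| ->]]. apply tri_v1. apply tri_v2. apply tri_v3. Qed.

Lemma tri_same (X : pt2 -> Prop) x1 x2 x3 a b c : seteq X (tri x1 x2 x3) ->
  (forall z, (z = x1 \/ z = x2 \/ z = x3) -> z = a \/ z = b \/ z = c) ->
  (a = x1 \/ a = x2 \/ a = x3) -> (b = x1 \/ b = x2 \/ b = x3) -> (c = x1 \/ c = x2 \/ c = x3) ->
  seteq X (tri a b c).
Proof.
  intros S H Ha Hb Hc x. rewrite (S x). split; intro Hx.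
  - eapply tri_convex; [ | | | exact Hx]; apply in_tri_of_mem, H; tauto.
  - eapply tri_convex; [ | | | exact Hx]; apply in_tri_of_mem; auto.
Qed.

Lemma TRI_canon eps T t1 t2 t3 p q : 0 < eps -> TRI eps T t1 t2 t3 ->
  in_lattice eps p -> in_lattice eps q -> T p -> T q -> p <> q ->
  exists k, in_lattice eps k /\ k <> p /\ k <> q /\ sqd k p = eps^2 /\ sqd k q = eps^2 /\
    seteq T (tri p q k).
Proof.
  intros He HT Lp Lq Tp Tq Hpq.
  destruct (TRI_dist _ _ _ _ _ He HT) as (D1&D2&D3).
  assert (Vp := TRI_vert _ _ _ _ _ _ He HT Lp Tp).
  assert (Vq := TRI_vert _ _ _ _ _ _ He HT Lq Tq).
  destruct (third_vertex t1 t2 t3 p q D1 D2 D3 Vp Vq Hpq) as (k&Vk&Kp&Kq&All).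
  exists k. split; [|split; [auto|split; [auto|split; [|split]]]].
  - eapply TRI_lat; eauto.
  - eapply TRI_pair; eauto.
  - eapply TRI_pair; eauto.
  - destruct HT as (_&_&_&_&_&_&S). eapply tri_same. exact S. all: auto.
Qed.

Lemma edge_unique eps T X Y p q : 0 < eps -> is_triangle eps T -> is_triangle eps X -> is_triangle eps Y ->
  in_lattice eps p -> in_lattice eps q -> sqd p q = eps^2 ->
  seteq (fun x => T x /\ X x) (seg p q) -> seteq (fun x => T x /\ Y x) (seg p q) -> X = Y.
Proof.
  intros He HT HX HY Lp Lq Dpq SX SY.
  assert (Hpq : p <> q). { intro E; subst. rewrite sqd_refl in Dpq. nra. }
  destruct (is_tri_TRI _ _ He HT) as (t1&t2&t3&TT).
  destruct (is_tri_TRI _ _ He HX) as (x1&x2&x3&TX).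
  destruct (is_tri_TRI _ _ He HY) as (y1&y2&y3&TY).
  destruct (proj2 (SX p) (seg_l p q)) as [Tp Xp].
  destruct (proj2 (SX q) (seg_r p q)) as [Tq Xq].
  destruct (proj2 (SY p) (seg_l p q)) as [_ Yp].
  destruct (proj2 (SY q) (seg_r p q)) as [_ Yq].
  destruct (TRI_canon _ _ _ _ _ _ _ He TT Lp Lq Tp Tq Hpq) as (kT&LT&T1&T2&T3&T4&ST).
  destruct (TRI_canon _ _ _ _ _ _ _ He TX Lp Lq Xp Xq Hpq) as (kX&LX&X1&X2&X3&X4&SX').
  destruct (TRI_canon _ _ _ _ _ _ _ He TY Lp Lq Yp Yq Hpq) as (kY&LY&Y1&Y2&Y3&Y4&SY').
  assert (E2 : 0 < eps^2) by nra.
  destruct (two_point p q kT kX kY (eps^2) E2 Dpq T3 T4 X3 X4 Y3 Y4) as [E|[E|E]].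
  - exfalso. subst kX.
    assert (Hs : seg p q kT). { apply SX. split; [apply ST|apply SX']; apply tri_v3. }
    destruct (seg_lat _ _ _ _ He Lp Lq LT Dpq Hs); auto.
  - exfalso. subst kY.
    assert (Hs : seg p q kT). { apply SY. split; [apply ST|apply SY']; apply tri_v3. }
    destruct (seg_lat _ _ _ _ He Lp Lq LT Dpq Hs); auto.
  - subst kY. apply seteq_eq. intro x. rewrite (SX' x), (SY' x). tauto.
Qed.

Lemma seteq_seg_sym (A : pt2 -> Prop) x y : seteq A (seg x y) -> seteq A (seg y x).
Proof. intros H z. rewrite (H z). split; apply seg_sym. Qed.

Lemma anti_sym (a b : pt3) : a = opp3 b -> b = opp3 a.
Proof. intros ->. rewrite opp3_inv. auto. Qed.

Definition LAB eps u (T X : pt2 -> Prop) a b :=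
  seteq (fun x => T x /\ X x) (seg a b) /\ u a = opp3 (u b) /\
  in_lattice eps a /\ in_lattice eps b /\ sqd a b = eps^2.

Lemma nb_label eps u T X t1 t2 t3 : 0 < eps -> TRI eps T t1 t2 t3 -> neighbours eps u T X ->
  LAB eps u T X t1 t2 \/ LAB eps u T X t2 t3 \/ LAB eps u T X t1 t3.
Proof.
  intros He HT (_&_&x&y&(Lx&Ly&Dxy&Axy)&S).
  destruct (proj2 (S x) (seg_l x y)) as [Tx _].
  destruct (proj2 (S y) (seg_r x y)) as [Ty _].
  assert (Vx := TRI_vert _ _ _ _ _ _ He HT Lx Tx).
  assert (Vy := TRI_vert _ _ _ _ _ _ He HT Ly Ty).
  apply dist_sqd in Dxy; auto.
  assert (Hxy : x <> y). { intro E; subst. rewrite sqd_refl in Dxy. nra. }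
  assert (S' := seteq_seg_sym _ _ _ S).
  assert (A' := anti_sym _ _ Axy).
  rewrite sqd_sym in Dxy. assert (Dyx := Dxy). rewrite sqd_sym in Dxy.
  unfold LAB.
  destruct Vx as [->|[->| ->]]; destruct Vy as [->|[->| ->]];
  try (exfalso; apply Hxy; reflexivity); tauto.
Qed.

Lemma lab_unique eps u T X Y a b : 0 < eps -> is_triangle eps T -> is_triangle eps X -> is_triangle eps Y ->
  LAB eps u T X a b -> LAB eps u T Y a b -> X = Y.
Proof.
  intros He HT HX HY (S1&_&La&Lb&D) (S2&_).
  apply (edge_unique eps T X Y a b); auto.
Qed.

Lemma no_three eps u (T X Y Z : pt2 -> Prop) t1 t2 t3 :
  LAB eps u T X t1 t2 -> LAB eps u T Y t2 t3 -> LAB eps u T Z t1 t3 -> on_sphere (u t3) -> False.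
Proof.
  intros (_&A1&_) (_&A2&_) (_&A3&_) Hs.
  apply (sphere_nofix _ Hs). rewrite <- A3, A1, A2, opp3_inv. reflexivity.
Qed.

Lemma SF_sphere eps Omega u p : SF eps Omega u -> in_lattice eps p -> on_sphere (u p).
Proof. intros [H _] L. apply H, L. Qed.

Lemma deg2 eps Omega u : 0 < eps -> SF eps Omega u ->
  forall T X Y Z, neighbours eps u T X -> neighbours eps u T Y -> neighbours eps u T Z ->
  X = Y \/ X = Z \/ Y = Z.
Proof.
  intros He HSF T X Y Z NX NY NZ.
  assert (HT : is_triangle eps T) by apply NX.
  assert (HX : is_triangle eps X) by apply NX.
  assert (HY : is_triangle eps Y) by apply NY.
  assert (HZ : is_triangle eps Z) by apply NZ.
  destruct (is_tri_TRI _ _ He HT) as (t1&t2&t3&TT).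
  assert (Sp : on_sphere (u t3)).
  { eapply SF_sphere; eauto. eapply TRI_lat; eauto. }
  assert (LX := nb_label _ _ _ _ _ _ _ He TT NX).
  assert (LY := nb_label _ _ _ _ _ _ _ He TT NY).
  assert (LZ := nb_label _ _ _ _ _ _ _ He TT NZ).
  destruct LX as [LX|[LX|LX]]; destruct LY as [LY|[LY|LY]]; destruct LZ as [LZ|[LZ|LZ]];
  first [ left; eapply (lab_unique eps u T X Y); eassumption
        | right; left; eapply (lab_unique eps u T X Z); eassumption
        | right; right; eapply (lab_unique eps u T Y Z); eassumption
        | exfalso; eapply (no_three eps u T _ _ _ t1 t2 t3); eassumption ].
Qed.

Lemma nb_sym eps u T X : neighbours eps u T X -> neighbours eps u X T.
Proof.
  intros (HT&HX&x&y&A&S). split; [auto|split; [auto|]].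
  exists x, y. split; auto. intro z. rewrite <- (S z). tauto.
Qed.

Lemma leaf_deg eps Omega u a T p q r : 0 < eps -> SF eps Omega u -> is_triangle eps T ->
  in_lattice eps p -> in_lattice eps q -> in_lattice eps r -> T p -> T q -> T r ->
  u p = a -> u q = opp3 a -> u r <> a -> u r <> opp3 a ->
  forall X Y, neighbours eps u T X -> neighbours eps u T Y -> X = Y.
Proof.
  intros He HSF HT Lp Lq Lr Tp Tq Tr Up Uq Ur1 Ur2 X Y NX NY.
  assert (HX : is_triangle eps X) by apply NX.
  assert (HY : is_triangle eps Y) by apply NY.
  assert (Ha : a <> opp3 a). { apply sphere_nofix. rewrite <- Up. eapply SF_sphere; eauto. }
  assert (Haa := opp3_inv a).
  destruct (is_tri_TRI _ _ He HT) as (t1&t2&t3&TT).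
  assert (LX := nb_label _ _ _ _ _ _ _ He TT NX).
  assert (LY := nb_label _ _ _ _ _ _ _ He TT NY).
  assert (Vp := TRI_vert _ _ _ _ _ _ He TT Lp Tp).
  assert (Vq := TRI_vert _ _ _ _ _ _ He TT Lq Tq).
  assert (Vr := TRI_vert _ _ _ _ _ _ He TT Lr Tr).
  destruct LX as [LX|[LX|LX]]; pose proof (proj1 (proj2 LX)) as AX; pose proof (anti_sym _ _ AX) as AX';
  destruct LY as [LY|[LY|LY]]; pose proof (proj1 (proj2 LY)) as AY; pose proof (anti_sym _ _ AY) as AY';
  destruct Vp as [->|[->| ->]]; destruct Vq as [->|[->| ->]]; destruct Vr as [->|[->| ->]];
  first [ exfalso; congruence | eapply (lab_unique eps u T X Y); eassumption ].
Qed.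

Lemma pig4 {A} (p q x y t1 t2 t3 : A) :
  (p = t1 \/ p = t2 \/ p = t3) -> (q = t1 \/ q = t2 \/ q = t3) ->
  (x = t1 \/ x = t2 \/ x = t3) -> (y = t1 \/ y = t2 \/ y = t3) ->
  p <> q -> x <> y -> x = p \/ x = q \/ y = p \/ y = q.
Proof.
  intros Hp Hq Hx Hy D1 D2.
  destruct Hp as [->|[->| ->]]; destruct Hq as [->|[->| ->]];
  destruct Hx as [->|[->| ->]]; destruct Hy as [->|[->| ->]]; tauto.
Qed.

Definition Inv eps (u : pt2 -> pt3) a (T : pt2 -> Prop) := exists p q,
  in_lattice eps p /\ in_lattice eps q /\ T p /\ T q /\ u p = a /\ u q = opp3 a.

Lemma inv_step eps u a T T' : 0 < eps -> a <> opp3 a -> Inv eps u a T -> neighbours eps u T T' ->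
  Inv eps u a T'.
Proof.
  intros He Ha (p&q&Lp&Lq&Tp&Tq&Up&Uq) NT.
  assert (NT' := NT).
  destruct NT as (HT&_&x&y&(Lx&Ly&Dxy&Axy)&S).
  destruct (proj2 (S x) (seg_l x y)) as [Tx T'x].
  destruct (proj2 (S y) (seg_r x y)) as [Ty T'y].
  destruct (is_tri_TRI _ _ He HT) as (t1&t2&t3&TT).
  assert (Vp := TRI_vert _ _ _ _ _ _ He TT Lp Tp).
  assert (Vq := TRI_vert _ _ _ _ _ _ He TT Lq Tq).
  assert (Vx := TRI_vert _ _ _ _ _ _ He TT Lx Tx).
  assert (Vy := TRI_vert _ _ _ _ _ _ He TT Ly Ty).
  apply dist_sqd in Dxy; auto.
  assert (Hxy : x <> y). { intro E; subst. rewrite sqd_refl in Dxy. nra. }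
  assert (Hpq : p <> q). { intro E; subst. congruence. }
  assert (A' := anti_sym _ _ Axy). assert (Haa := opp3_inv a).
  destruct (pig4 p q x y t1 t2 t3 Vp Vq Vx Vy Hpq Hxy) as [E|[E|[E|E]]].
  - exists x, y. repeat split; auto; congruence.
  - exists y, x. repeat split; auto; congruence.
  - exists y, x. repeat split; auto; congruence.
  - exists x, y. repeat split; auto; congruence.
Qed.

Lemma inv_crt eps u a T T' : 0 < eps -> a <> opp3 a ->
  clos_refl_trans _ (neighbours eps u) T T' -> Inv eps u a T -> Inv eps u a T'.
Proof.
  intros He Ha H. induction H; auto. intro; eapply inv_step; eauto.
Qed.

Lemma three_vals eps u a T x y r z : 0 < eps -> a <> opp3 a -> is_triangle eps T ->
  in_lattice eps x -> in_lattice eps y -> in_lattice eps r -> in_lattice eps z ->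
  T x -> T y -> T r -> T z -> u x = a -> u y = opp3 a -> u r <> a -> u r <> opp3 a ->
  u z = a \/ u z = opp3 a \/ u z = u r.
Proof.
  intros He Ha HT Lx Ly Lr Lz Tx Ty Tr Tz Ux Uy Ur1 Ur2.
  destruct (is_tri_TRI _ _ He HT) as (t1&t2&t3&TT).
  assert (Vx := TRI_vert _ _ _ _ _ _ He TT Lx Tx).
  assert (Vy := TRI_vert _ _ _ _ _ _ He TT Ly Ty).
  assert (Vr := TRI_vert _ _ _ _ _ _ He TT Lr Tr).
  assert (Vz := TRI_vert _ _ _ _ _ _ He TT Lz Tz).
  destruct Vx as [->|[->| ->]]; destruct Vy as [->|[->| ->]];
  destruct Vr as [->|[->| ->]]; destruct Vz as [->|[->| ->]];
  first [ exfalso; congruence | tauto ].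
Qed.

Theorem lemma5p3 (eps : R) (Omega : pt2 -> Prop) (u : pt2 -> pt3) (Rg : pt2 -> Prop) :
  0 < eps -> open2 Omega -> bounded2 Omega -> SF eps Omega u ->
  admissible_region eps u Rg ->
  exists v1 v2 v3 v4 : pt3,
    forall p, in_lattice eps p -> Rg p ->
      u p = v1 \/ u p = v2 \/ u p = v3 \/ u p = v4.
Proof.
  intros He _ _ HSF [[F [HF [Hc HS]]] _].
  destruct (classic (exists T0, F T0)) as [[T0 F0]|NF].
  2:{ exists north, north, north, north. intros p Lp Rp. apply HS in Rp.
      destruct Rp as [T [FT _]]. exfalso; eauto. }
  destruct (classic (exists X0, neighbours eps u T0 X0)) as [[X0 N0]|NN].
  - destruct N0 as (_&_&p0&q0&(Lp0&Lq0&_&A0)&S0).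
    set (a := u p0).
    assert (Ha : a <> opp3 a) by (apply sphere_nofix; eapply SF_sphere; eauto).
    assert (I0 : Inv eps u a T0).
    { exists p0, q0. repeat split; auto.
      apply (proj2 (S0 p0) (seg_l p0 q0)). apply (proj2 (S0 q0) (seg_r p0 q0)).
      apply anti_sym in A0. rewrite A0. reflexivity. }
    assert (IA : forall T, F T -> Inv eps u a T).
    { intros T FT. exact (inv_crt eps u a T0 T He Ha (Hc T0 T F0 FT) I0). }
    assert (Extra : forall p, in_lattice eps p -> Rg p -> u p <> a -> u p <> opp3 a ->
       exists T, F T /\ T p /\ forall X Y, neighbours eps u T X -> neighbours eps u T Y -> X = Y).
    { intros p Lp Rp U1 U2. apply HS in Rp. destruct Rp as [T [FT Tp]].
      exists T. split; auto. split; auto.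
      destruct (IA T FT) as (x&y&Lx&Ly&Tx&Ty&Ux&Uy).
      exact (leaf_deg eps Omega u a T x y p He HSF (HF T FT) Lx Ly Lp Tx Ty Tp Ux Uy U1 U2). }
    assert (Key : forall p1 p2 p3, in_lattice eps p1 -> Rg p1 -> in_lattice eps p2 -> Rg p2 ->
       in_lattice eps p3 -> Rg p3 ->
       u p1 <> a -> u p1 <> opp3 a -> u p2 <> a -> u p2 <> opp3 a -> u p3 <> a -> u p3 <> opp3 a ->
       u p1 <> u p2 -> u p1 <> u p3 -> u p2 <> u p3 -> False).
    { intros p1 p2 p3 L1 R1 L2 R2 L3 R3 a1 b1 a2 b2 a3 b3 d12 d13 d23.
      destruct (Extra p1 L1 R1 a1 b1) as (T1&F1&T1p&Lf1).
      destruct (Extra p2 L2 R2 a2 b2) as (T2&F2&T2p&Lf2).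
      destruct (Extra p3 L3 R3 a3 b3) as (T3&F3&T3p&Lf3).
      assert (Dist : forall Ti Tj pi pj, F Ti -> Ti pi -> Tj pj -> in_lattice eps pi -> in_lattice eps pj ->
                 u pi <> a -> u pi <> opp3 a -> u pj <> a -> u pj <> opp3 a -> u pi <> u pj -> Ti <> Tj).
      { intros Ti Tj pi pj Fi Tip Tjp Li Lj ai bi aj bj dij E. subst Tj.
        destruct (IA Ti Fi) as (x&y&Lx&Ly&Tx&Ty&Ux&Uy).
        destruct (three_vals eps u a Ti x y pi pj He Ha (HF _ Fi) Lx Ly Li Lj Tx Ty Tip Tjp Ux Uy ai bi)
          as [E|[E|E]]; auto. }
      apply (three_leaves (neighbours eps u) (nb_sym eps u) (deg2 eps Omega u He HSF) T1 T2 T3 Lf1 Lf2 Lf3).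
      - eapply Dist; eauto.
      - eapply Dist; eauto.
      - eapply Dist; eauto.
      - apply Hc; auto.
      - apply Hc; auto. }
    set (E := fun b => exists p, in_lattice eps p /\ Rg p /\ u p = b /\ b <> a /\ b <> opp3 a).
    destruct (classic (exists b1, E b1)) as [[b1 Eb1]|NE].
    + destruct (classic (exists b2, E b2 /\ b2 <> b1)) as [[b2 [Eb2 D12]]|NE2].
      * exists a, (opp3 a), b1, b2. intros p Lp Rp.
        destruct (classic (u p = a)); auto. destruct (classic (u p = opp3 a)); auto.
        destruct (classic (u p = b1)); auto. destruct (classic (u p = b2)); auto.
        exfalso. destruct Eb1 as (p1&L1&R1&U1&a1&c1). destruct Eb2 as (p2&L2&R2&U2&a2&c2).
        subst b1 b2.
        apply (Key p1 p2 p); auto.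
      * exists a, (opp3 a), b1, b1. intros p Lp Rp.
        destruct (classic (u p = a)); auto. destruct (classic (u p = opp3 a)); auto.
        destruct (classic (u p = b1)); auto. exfalso. apply NE2. exists (u p).
        split; auto. exists p; auto.
    + exists a, (opp3 a), a, a. intros p Lp Rp.
      destruct (classic (u p = a)); auto. destruct (classic (u p = opp3 a)); auto.
      exfalso. apply NE. exists (u p). exists p; auto.
  - assert (Single : forall T, F T -> T = T0).
    { intros T FT. assert (C := Hc T0 T F0 FT). apply clos_rt_rt1n in C.
      destruct C as [|y z Ny _]; auto. exfalso; eauto. }
    destruct (is_tri_TRI _ _ He (HF _ F0)) as (t1&t2&t3&TT).
    exists (u t1), (u t2), (u t3), north. intros p Lp Rp.
    apply HS in Rp. destruct Rp as [T [FT Tp]]. rewrite (Single T FT) in Tp.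
    destruct (TRI_vert _ _ _ _ _ _ He TT Lp Tp) as [->|[->| ->]]; auto.
Qed.
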